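(* Let $\Sigma$ be a Horn sequent $W,\Gamma,!\Delta\vdash Z$. If $\Sigma$ has a cut-free derivation in propositional linear logic (which can only use the rules I, L$\otimes$, R$\otimes$, L$\multimap$, L$\multimap\oplus$, L$\oplus$, L!, W!, C! listed in the context), then $\Sigma$ is derivable in Horn Linear Logic $\mathbf{HLL}$.
   Context: Positive literals are propositional variables. A simple product is a tensor product $q_1\otimes\cdots\otimes q_k$ ($k\ge 1$) of positive literals; $\otimes$ and $\oplus$ are treated as commutative and associative, so simple products correspond to nonempty finite multisets of literals, and $X\cong Y$ means $X,Y$ represent the same multiset. A Horn implication is a formula $X\multimap Y$ and a $\oplus$-Horn implication is $X\multimap(Y_1\oplus Y_2)$, where $X,Y,Y_1,Y_2$ are simple products. A Horn sequent is a sequent $W,\Gamma,!\Delta\vdash Z$ where $W,Z$ are simple products and $\Gamma,\Delta$ are finite multisets of Horn and $\oplus$-Horn implications ($!\Delta$ denotes $\{!A: A\in\Delta\}$). The linear logic rules that can occur in cut-free derivations of Horn sequents are: I: $X\vdash X$; L$\otimes$: from $\Sigma,X,Y\vdash Z$ infer $\Sigma,X\otimes Y\vdash Z$; R$\otimes$: from $\Sigma_1\vdash Z_1$ and $\Sigma_2\vdash Z_2$ infer $\Sigma_1,\Sigma_2\vdash Z_1\otimes Z_2$; L$\multimap$: from $\Sigma_1\vdash X$ and $Y,\Sigma_2\vdash Z$ infer $\Sigma_1,X\multimap Y,\Sigma_2\vdash Z$; L$\multimap\oplus$: from $\Sigma_1\vdash X$ and $(Y_1\oplus Y_2),\Sigma_2\vdash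 Z$ infer $\Sigma_1,X\multimap(Y_1\oplus Y_2),\Sigma_2\vdash Z$; L$\oplus$: from $\Sigma,Y_1\vdash Z$ and $\Sigma,Y_2\vdash Z$ infer $\Sigma,Y_1\oplus Y_2\vdash Z$; L!: from $\Sigma,A\vdash Z$ infer $\Sigma,!A\vdash Z$; W!: from $\Sigma\vdash Z$ infer $\Sigma,!A\vdash Z$; C!: from $\Sigma,!A,!A\vdash Z$ infer $\Sigma,!A\vdash Z$. $\mathbf{HLL}$ is the calculus on sequents $X,\Gamma,!\Delta\vdash Z$ ($X,Z$ simple products, $\Gamma,\Delta$ multisets of Horn/$\oplus$-Horn implications, and in the conclusion of a rule $(U\otimes V)$ in the antecedent may be identified with $U,V$) with rules: I: $X\vdash X$; L$\otimes$: from $X,\Gamma,!\Delta\vdash Z$ infer $Y,\Gamma,!\Delta\vdash Z$ where $X\cong Y$; H: $X,\,X\multimap Y\vdash Y$; M: from $X,\Gamma,!\Delta\vdash Y$ infer $(X\otimes V),\Gamma,!\Delta\vdash (Y\otimes V)$; $\oplus$-H: from $(Y_1\otimes V),\Gamma,!\Delta\vdash Z$ and $(Y_2\otimes V),\Gamma,!\Delta\vdash Z$ infer $(X\otimes V),\Gamma,X\multimap(Y_1\oplus Y_2),!\Delta\vdash Z$; L!: from $X,\Gamma,A,!\Delta\vdash Z$ infer $X,\Gamma,!A,!\Delta\vdash Z$; W!: from $X,\Gamma,!\Delta\vdash Z$ infer $X,\Gamma,!A,!\Delta\vdash Z$; C!: from $X,\Gamma,!A,!A,!\Delta\vdash Z$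 infer $X,\Gamma,!A,!\Delta\vdash Z$; Cut: from $W,\Gamma_1,!\Delta_1\vdash U$ and $U,\Gamma_2,!\Delta_2\vdash Z$ infer $W,\Gamma_1,\Gamma_2,!\Delta_1,!\Delta_2\vdash Z$. Here $A$ ranges over Horn and $\oplus$-Horn implications. *)

(* Defs.v *)
From Stdlib Require Export List Permutation.
Export ListNotations.

Definition lit := nat.

(* Formulas of the fragment of propositional linear logic that can occur
   in cut-free derivations of Horn sequents. *)
Inductive fml : Type :=
| Lit   : lit -> fml
| Tens  : fml -> fml -> fml
| Lolli : fml -> fml -> fml
| Plus  : fml -> fml -> fml
| Bang  : fml -> fml.

(* Cut-free derivability in propositional linear logic, using only the rules
   I, L(x), R(x), L(-o) (which includes L(-o +) as the instance B = Y1 (+) Y2),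
   L(+), L!, W!, C!.  Antecedents are multisets, represented by lists
   modulo permutation (explicit exchange rule). *)
Inductive ll : list fml -> fml -> Prop :=
| ll_ex G G' C : Permutation G G' -> ll G C -> ll G' C
| ll_I A : ll [A] A
| ll_Ltens G A B C : ll (A :: B :: G) C -> ll (Tens A B :: G) C
| ll_Rtens G1 G2 A B : ll G1 A -> ll G2 B -> ll (G1 ++ G2) (Tens A B)
| ll_Llolli G1 G2 A B C :
    ll G1 A -> ll (B :: G2) C -> ll (Lolli A B :: G1 ++ G2) C
| ll_Lplus G A B C : ll (A :: G) C -> ll (B :: G) C -> ll (Plus A B :: G) C
| ll_Lbang G A C : ll (A :: G) C -> ll (Bang A :: G) C
| ll_Wbang G A C : ll G C -> ll (Bang A :: G) C
| ll_Cbang G A C : ll (Bang A :: Bang A :: G) C -> ll (Bang A :: G) C.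

(* Simple products are represented by (nonempty) lists of literals, i.e.
   multisets up to permutation.  Their formula: q1 (x) (q2 (x) ... qk). *)
Fixpoint prodf (l : list lit) : fml :=
  match l with
  | [] => Lit 0 (* dummy: never used for well-formed (nonempty) products *)
  | [q] => Lit q
  | q :: l' => Tens (Lit q) (prodf l')
  end.

Inductive himp : Type :=
| HI : list lit -> list lit -> himp
| OI : list lit -> list lit -> list lit -> himp.

Definition wf_himp (A : himp) : Prop :=
  match A with
  | HI X Y => X <> [] /\ Y <> []
  | OI X Y1 Y2 => X <> [] /\ Y1 <> [] /\ Y2 <> []
  end.

Definition himp_fml (A : himp) : fml :=
  match A with
  | HI X Y => Lolli (prodf X) (prodf Y)
  | OI X Y1 Y2 => Lolli (prodf X) (Plus (prodf Y1) (prodf Y2))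
  end.

Definition horn_ll (W : list lit) (G D : list himp) (Z : list lit) : Prop :=
  ll (prodf W :: map himp_fml G ++ map (fun A => Bang (himp_fml A)) D) (prodf Z).

(* The calculus HLL on sequents X, Gamma, !Delta |- Z, written hll X Gamma Delta Z.
   (X (x) V) is list concatenation X ++ V; V may be empty (the rule M with
   empty V is trivial, and (+)-H needs the case V empty). Gamma and Delta are
   multisets (explicit exchange rule h_ex). *)
Inductive hll : list lit -> list himp -> list himp -> list lit -> Prop :=
| h_I X : X <> [] -> hll X [] [] X
| h_Ltens X Y G D Z : Permutation X Y -> hll X G D Z -> hll Y G D Z
| h_ex X G G' D D' Z :
    Permutation G G' -> Permutation D D' -> hll X G D Z -> hll X G' D' Z
| h_H X Y : hll X [HI X Y] [] Y
| h_M X V G D Y : hll X G D Y -> hll (X ++ V) G D (Y ++ V)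
| h_OH X V Y1 Y2 G D Z :
    hll (Y1 ++ V) G D Z -> hll (Y2 ++ V) G D Z ->
    hll (X ++ V) (OI X Y1 Y2 :: G) D Z
| h_Lbang X G D A Z : hll X (A :: G) D Z -> hll X G (A :: D) Z
| h_Wbang X G D A Z : hll X G D Z -> hll X G (A :: D) Z
| h_Cbang X G D A Z : hll X G (A :: A :: D) Z -> hll X G (A :: D) Z
| h_Cut W G1 D1 U G2 D2 Z :
    U <> [] -> hll W G1 D1 U -> hll U G2 D2 Z ->
    hll W (G1 ++ G2) (D1 ++ D2) Z.

(* Main.v *)
Require Import Defs.

Fixpoint pf (f : fml) : Prop :=
  match f with Lit _ => True | Tens a b => pf a /\ pf b | _ => False end.
Fixpoint lits (f : fml) : list lit :=
  match f with Lit q => [q] | Tens a b => lits a ++ lits b | _ => [] end.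
Definition gam_of (f : fml) : list himp :=
  match f with
  | Lolli a (Plus b1 b2) => [OI (lits a) (lits b1) (lits b2)]
  | Lolli a b => [HI (lits a) (lits b)]
  | _ => [] end.
Definition del_of (f : fml) : list himp :=
  match f with Bang g => gam_of g | _ => [] end.
Definition goodImp (f : fml) : Prop :=
  match f with
  | Lolli a b => pf a /\ (pf b \/ match b with Plus b1 b2 => pf b1 /\ pf b2 | _ => False end)
  | _ => False end.
Definition valid (f : fml) : Prop :=
  pf f \/ (match f with Plus a b => pf a /\ pf b | Bang g => goodImp g | _ => False end)
  \/ goodImp f.
Definition selF (f : fml) (c : list lit) : Prop :=
  match f with Plus a b => c = lits a \/ c = lits b | _ => c = lits f end.
Inductive sel : list fml -> list lit -> Prop :=
| sel_nil : sel [] []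
| sel_cons f c G L : selF f c -> sel G L -> sel (f :: G) (c ++ L).
Definition gamL (S : list fml) := flat_map gam_of S.
Definition delL (S : list fml) := flat_map del_of S.

Lemma pf_ne f : pf f -> lits f <> [].
Proof.
  induction f; simpl; try tauto; try congruence.
  intros [Ha Hb] E. apply app_eq_nil in E. destruct E. tauto.
Qed.

Lemma pf_facts f : pf f -> selF f (lits f) /\ gam_of f = [] /\ del_of f = [].
Proof. destruct f; simpl; tauto. Qed.

Lemma pf_sel f c : pf f -> selF f c -> c = lits f.
Proof. destruct f; simpl; tauto. Qed.

Lemma sel_app_inv G1 G2 L : sel (G1 ++ G2) L ->
  exists L1 L2, L = L1 ++ L2 /\ sel G1 L1 /\ sel G2 L2.
Proof.
  revert L; induction G1 as [|f G1 IH]; intros L H; simpl in H.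
  - exists [], L. repeat split; auto. constructor.
  - inversion H; subst. destruct (IH _ H4) as (L1 & L2 & E & S1 & S2); subst.
    exists (c ++ L1), L2. rewrite app_assoc. repeat split; auto. constructor; auto.
Qed.

Lemma sel_perm G G' : Permutation G G' -> forall L, sel G' L ->
  exists L', sel G L' /\ Permutation L' L.
Proof.
  induction 1; intros L HH.
  - exists L; split; auto.
  - inversion HH as [|f c G0 L0 Hf Hg]; subst. destruct (IHPermutation _ Hg) as (L' & S & P).
    exists (c ++ L'); split. constructor; auto. apply Permutation_app_head; auto.
  - inversion HH as [|f c G0 L0 Hf Hg]; subst. inversion Hg as [|f' c0 G1 L1 Hf' Hg']; subst.
    exists (c0 ++ c ++ L1); split. constructor; auto. constructor; auto.
    rewrite !app_assoc. apply Permutation_app_tail, Permutation_app_comm.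
  - destruct (IHPermutation2 _ HH) as (L1 & S1 & P1).
    destruct (IHPermutation1 _ S1) as (L2 & S2 & P2).
    exists L2; split; auto. eapply perm_trans; eauto.
Qed.

Lemma permR X G D Z Z' : hll X G D Z -> Z <> [] -> Permutation Z Z' -> hll X G D Z'.
Proof.
  intros H Hn P.
  assert (H2 : hll Z [] [] Z').
  { apply h_Ltens with Z'. apply Permutation_sym; auto. apply h_I.
    intro E; subst. apply Permutation_sym, Permutation_nil in P. auto. }
  pose proof (h_Cut _ _ _ _ _ _ _ Hn H H2) as H3. rewrite !app_nil_r in H3. exact H3.
Qed.

Lemma sel_cons_inv f G L : sel (f :: G) L -> exists c L', L = c ++ L' /\ selF f c /\ sel G L'.
Proof. intros H; inversion H; subst; eauto. Qed.

Lemma valid_cases f : valid f ->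
  match f with
  | Lit _ => True
  | Tens a b => pf a /\ pf b
  | Plus a b => pf a /\ pf b
  | Lolli a b => goodImp (Lolli a b)
  | Bang g => goodImp g
  end.
Proof. destruct f; unfold valid; simpl; tauto. Qed.

Lemma goodImp_gam A : goodImp A -> exists h, gam_of A = [h] /\ del_of A = [].
Proof. destruct A; simpl; try tauto. destruct A2; eauto. Qed.

Lemma fm_cons {A B} (f : A -> list B) x l : flat_map f (x :: l) = f x ++ flat_map f l.
Proof. reflexivity. Qed.

Lemma main S C : ll S C -> Forall valid S -> pf C -> forall L, sel S L ->
  hll L (gamL S) (delL S) (lits C).
Proof.
  induction 1; intros HV HC L HS.
  -
    destruct (sel_perm _ _ H _ HS) as (L' & S' & P).
    apply h_ex with (gamL G) (delL G).
    apply Permutation_flat_map; auto. apply Permutation_flat_map; auto.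
    apply h_Ltens with L'; auto. apply IHll; auto.
    eapply Permutation_Forall. apply Permutation_sym; eauto. auto.
  - destruct (sel_cons_inv _ _ _ HS) as (c & L' & E & Hf & Hg); subst.
    inversion Hg; subst.
    destruct (pf_facts _ HC) as (_ & E1 & E2).
    rewrite (pf_sel _ _ HC Hf). unfold gamL, delL; simpl. rewrite E1, E2, !app_nil_r.
    apply h_I. apply pf_ne; auto.
  - destruct (sel_cons_inv _ _ _ HS) as (c & L0 & E & Hf & Hg); subst.
    pose proof (valid_cases _ (Forall_inv HV)) as [HA HB]. pose proof (Forall_inv_tail HV) as HV'.
    simpl in Hf. subst c.
    destruct (pf_facts _ HA) as (SA & GA & DA).
    destruct (pf_facts _ HB) as (SB & GB & DB).
    specialize (IHll ltac:(repeat constructor; auto; left; auto) HC (lits A ++ lits B ++ L0)).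
    unfold gamL, delL in *; simpl in *. rewrite GA, GB, DA, DB in IHll. simpl in IHll.
    rewrite <- app_assoc. apply IHll. constructor; auto. constructor; auto.
  - simpl in HC. destruct HC as [HA HB].
    destruct (sel_app_inv _ _ _ HS) as (L1 & L2 & E & S1 & S2); subst.
    apply Forall_app in HV. destruct HV as [V1 V2].
    specialize (IHll1 V1 HA _ S1). specialize (IHll2 V2 HB _ S2).
    unfold gamL, delL in *. rewrite !flat_map_app. simpl.
    apply h_Cut with (lits A ++ L2).
    + intro E. apply app_eq_nil in E. destruct E. apply (pf_ne A); auto.
    + apply h_M; auto.
    + apply h_Ltens with (L2 ++ lits A). apply Permutation_app_comm.
      apply permR with (lits B ++ lits A). apply h_M; auto.
      intro E. apply app_eq_nil in E. destruct E. apply (pf_ne B); auto.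
      apply Permutation_app_comm.
  -
    destruct (sel_cons_inv _ _ _ HS) as (c & L0 & E & Hf & Hg); subst.
    pose proof (valid_cases _ (Forall_inv HV)) as GI. pose proof (Forall_inv_tail HV) as HV'.
    simpl in Hf. subst c. simpl.
    destruct (sel_app_inv _ _ _ Hg) as (L1 & L2 & E & S1 & S2); subst.
    apply Forall_app in HV'. destruct HV' as [V1 V2].
    simpl in GI. destruct GI as [HA HBB].
    specialize (IHll1 V1 HA _ S1).
    assert (Hne : lits A ++ L2 <> []).
    { intro E. apply app_eq_nil in E. destruct E. apply (pf_ne A); auto. }
    assert (Key : forall h, hll (lits A ++ L2) (h :: gamL G2) (delL G2) (lits C) ->
       gam_of (Lolli A B) = [h] ->
       hll (L1 ++ L2) (gamL (Lolli A B :: G1 ++ G2)) (delL (Lolli A B :: G1 ++ G2)) (lits C)).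
    { intros h Hh Eh. unfold gamL, delL in *. rewrite !fm_cons, Eh, !flat_map_app.
      apply h_ex with (gamL G1 ++ h :: gamL G2) (delL G1 ++ delL G2).
      unfold gamL. simpl. apply Permutation_sym, Permutation_middle. auto.
      apply h_Cut with (lits A ++ L2); auto. apply h_M; auto. }
    destruct HBB as [HB | HB].
    + destruct (pf_facts _ HB) as (SB & GB & DB).
      specialize (IHll2 ltac:(constructor; auto; left; auto) HC (lits B ++ L2)
                   ltac:(constructor; auto)).
      unfold gamL, delL in IHll2; simpl in IHll2. rewrite GB, DB in IHll2; simpl in IHll2.
      apply Key with (HI (lits A) (lits B)).
      * assert (NB : lits B ++ L2 <> []).
        { intro E; apply app_eq_nil in E; destruct E; apply (pf_ne B); auto. }
        pose proof (h_Cut _ _ _ _ _ _ _ NB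
                     (h_M _ L2 _ _ _ (h_H (lits A) (lits B))) IHll2) as Hc.
        exact Hc.
      * destruct B; simpl in HB |- *; tauto.
    + destruct B as [| | |B1 B2|]; try contradiction. destruct HB as [HB1 HB2].
      assert (VP : Forall valid (Plus B1 B2 :: G2)).
      { constructor; auto. right; left; simpl; auto. }
      pose proof (IHll2 VP HC (lits B1 ++ L2) ltac:(constructor; simpl; auto)) as I1.
      pose proof (IHll2 VP HC (lits B2 ++ L2) ltac:(constructor; simpl; auto)) as I2.
      unfold gamL, delL in I1, I2; simpl in I1, I2.
      apply Key with (OI (lits A) (lits B1) (lits B2)); auto.
      apply h_OH; auto.
  - destruct (sel_cons_inv _ _ _ HS) as (c & L0 & E & Hf & Hg); subst.
    pose proof (valid_cases _ (Forall_inv HV)) as [HA HB]. pose proof (Forall_inv_tail HV) as HV'.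
    unfold gamL, delL in *; simpl in *.
    destruct (pf_facts _ HA) as (SA & GA & DA).
    destruct (pf_facts _ HB) as (SB & GB & DB).
    destruct Hf; subst c.
    + specialize (IHll1 ltac:(constructor; auto; left; auto) HC _ ltac:(constructor; eauto)).
      simpl in IHll1. rewrite GA, DA in IHll1. exact IHll1.
    + specialize (IHll2 ltac:(constructor; auto; left; auto) HC _ ltac:(constructor; eauto)).
      simpl in IHll2. rewrite GB, DB in IHll2. exact IHll2.
  - destruct (sel_cons_inv _ _ _ HS) as (c & L0 & E & Hf & Hg); subst.
    pose proof (valid_cases _ (Forall_inv HV)) as GA. pose proof (Forall_inv_tail HV) as HV'.
    simpl in Hf. subst c.
    assert (VA : valid A) by (right; right; auto).
    assert (SA : selF A []) by (destruct A; simpl in GA |- *; tauto).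
    specialize (IHll ltac:(constructor; auto) HC _ ltac:(constructor; eauto)).
    unfold gamL, delL in *; simpl in *.
    destruct (goodImp_gam _ GA) as (h & E1 & E2). rewrite E1, E2 in IHll. simpl in IHll.
    rewrite E1. apply h_Lbang; auto.
  - destruct (sel_cons_inv _ _ _ HS) as (c & L0 & E & Hf & Hg); subst.
    pose proof (valid_cases _ (Forall_inv HV)) as GA. pose proof (Forall_inv_tail HV) as HV'.
    simpl in Hf. subst c. simpl.
    specialize (IHll HV' HC _ Hg).
    unfold gamL, delL in *; simpl in *.
    destruct (goodImp_gam _ GA) as (h & E1 & E2). rewrite E1. apply h_Wbang; auto.
  - destruct (sel_cons_inv _ _ _ HS) as (c & L0 & E & Hf & Hg); subst.
    pose proof (valid_cases _ (Forall_inv HV)) as GA. pose proof (Forall_inv_tail HV) as HV'.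
    simpl in Hf. subst c. simpl.
    specialize (IHll ltac:(constructor; [exact (Forall_inv HV)| auto]) HC ([] ++ [] ++ L0)
       ltac:(constructor; simpl; auto; constructor; simpl; auto)).
    unfold gamL, delL in *; simpl in *.
    destruct (goodImp_gam _ GA) as (h & E1 & E2). rewrite E1 in *. apply h_Cbang; auto.
Qed.

Lemma lits_prodf X : X <> [] -> lits (prodf X) = X.
Proof.
  induction X as [|q l IH]; intros H; [congruence|].
  destruct l as [|r l']; simpl; auto.
  simpl in IH. rewrite IH; auto. discriminate.
Qed.

Lemma pf_prodf X : pf (prodf X).
Proof. induction X as [|q l IH]; simpl; auto. destruct l; simpl; auto. Qed.

Lemma gam_himp h : wf_himp h -> gam_of (himp_fml h) = [h].
Proof.
  destruct h; simpl; intros.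
  - destruct H. pose proof (pf_prodf l0) as P.
    destruct (prodf l0) eqn:E; simpl in P; try contradiction;
    rewrite <- E, !lits_prodf; auto.
  - destruct H as (? & ? & ?). rewrite !lits_prodf; auto.
Qed.

Lemma good_himp h : goodImp (himp_fml h).
Proof.
  destruct h; simpl; split; auto using pf_prodf.
Qed.

Theorem theorem1 (W : list lit) (G D : list himp) (Z : list lit) :
  W <> [] -> Z <> [] ->
  Forall wf_himp G -> Forall wf_himp D ->
  horn_ll W G D Z ->
  hll W G D Z.
Proof.
  intros HW HZ HG HD H.
  pose proof (main _ _ H) as M.
  rewrite lits_prodf in M by auto.
  assert (E1 : gamL (prodf W :: map himp_fml G ++ map (fun A => Bang (himp_fml A)) D) = G).
  { unfold gamL. simpl. rewrite (proj1 (proj2 (pf_facts _ (pf_prodf W)))), flat_map_app.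
    simpl. assert (flat_map gam_of (map (fun A => Bang (himp_fml A)) D) = []).
    { clear. induction D; simpl; auto. }
    rewrite H0, app_nil_r. clear -HG. induction HG; simpl; auto.
    rewrite gam_himp; auto. simpl. f_equal; auto. }
  assert (E2 : delL (prodf W :: map himp_fml G ++ map (fun A => Bang (himp_fml A)) D) = D).
  { unfold delL. simpl. rewrite (proj2 (proj2 (pf_facts _ (pf_prodf W)))), flat_map_app.
    simpl. assert (flat_map del_of (map himp_fml G) = []).
    { clear. induction G as [|h G IH]; simpl; auto. destruct h; simpl; auto. }
    rewrite H0. clear -HD. induction HD; simpl; auto.
    rewrite gam_himp; auto. simpl. f_equal; auto. }
  rewrite E1, E2 in M. apply M.
  - constructor. left; apply pf_prodf. apply Forall_app; split.
    + clear. induction G; simpl; constructor; auto. right; right; apply good_himp.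
    + clear. induction D; simpl; constructor; auto. right; left; apply good_himp.
  - apply pf_prodf.
  - assert (SW : sel (prodf W :: map himp_fml G ++ map (fun A => Bang (himp_fml A)) D) (W ++ [])).
    2: rewrite app_nil_r in SW; exact SW.
    constructor.
    + pose proof (proj1 (pf_facts _ (pf_prodf W))). rewrite lits_prodf in H0; auto.
    + clear. induction G; simpl.
      * induction D; simpl. constructor. apply (sel_cons _ [] _ []); simpl; auto.
      * apply (sel_cons _ [] _ []); auto. destruct a; simpl; auto.
Qed.
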